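(* Let $X$ be convex and let $f$ be $\alpha$-robustly quasiconvex for some $\alpha>0$, with $X\subset\operatorname{dom}f$. Then $\mathrm{Sol}(\cdot)$ is lower semicontinuous at $0$ if and only if (a) $\mathrm{Sol}(0)$ is a singleton and (b) $X^\infty\cap\mathcal{K}_q(f)=\{0\}$.
   Context: Standing assumptions: $f:\mathbb{R}^n\to\mathbb{R}\cup\{\pm\infty\}$ is proper (never $-\infty$ and finite at some point) and lower semicontinuous; $X\subset\mathbb{R}^n$ is a nonempty closed set with $\operatorname{dom}f\cap X$ unbounded. $f$ is $\alpha$-robustly quasiconvex ($\alpha\ge0$) if $x\mapsto f(x)+\langle u,x\rangle$ is quasiconvex for every $u$ in the open ball $\mathbb{B}_\alpha$ of radius $\alpha$ about $0$ (quasiconvex: $g(\lambda x+(1-\lambda)y)\le\max\{g(x),g(y)\}$ for $x,y\in\operatorname{dom}g$, $\lambda\in[0,1]$). $X^\infty=\{u:\exists t_k\to+\infty,\ \exists x_k\in X,\ x_k/t_k\to u\}$. $f^\infty_q(u)=\sup_{x\in\operatorname{dom}f}\sup_{t>0}\frac{f(x+tu)-f(x)}{t}$, $\mathcal{K}_q(f)=\{d: f^\infty_q(d)\le0\}$. $f_u(x)=f(x)-\langle u,x\rangle$, $\mathrm{Sol}(u)=\{x\in X: f_u(x)\le f_u(y)\ \forall y\in X\}$. A set-valued map $F$ is lower semicontinuous at $\bar u$ if $F(\bar u)\ne\emptyset$ and for every open $V$ with $F(\bar u)\cap V\ne\emptyset$ there is a neighborhood $U$ of $\bar u$ with $F(u)\cap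 V\ne\emptyset$ for all $u\in U$. *)

(* Defs.v *)
(* R : realType, points of R^n are row vectors 'rV[R]_n
   (with the product topology = Euclidean topology), f takes values in \bar R. *)
From HB Require Import structures.
From mathcomp Require Import all_boot all_order all_algebra.
From mathcomp Require Import all_classical all_reals all_analysis.
Set Implicit Arguments. Unset Strict Implicit. Unset Printing Implicit Defensive.
Import Order.TTheory GRing.Theory Num.Theory.
Import numFieldNormedType.Exports.
Local Open Scope classical_set_scope.
Local Open Scope ring_scope.

Section Defs.
Variables (R : realType) (n : nat).
Notation V := 'rV[R]_n.

Definition dotp (u x : V) : R := \sum_(i < n) u ord0 i * x ord0 i.
Definition enorm (x : V) : R := Num.sqrt (dotp x x).

Definition dom (f : V -> \bar R) : set V := [set x | (f x < +oo)%E].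

Definition proper_fun (f : V -> \bar R) : Prop :=
  (forall x, f x != -oo%E) /\ (exists x, f x \is a fin_num).

Definition is_convex (X : set V) : Prop :=
  forall x y (l : R), X x -> X y -> 0 <= l <= 1 -> X (l *: x + (1 - l) *: y).

Definition quasiconvex (g : V -> \bar R) : Prop :=
  forall x y (l : R), dom g x -> dom g y -> 0 <= l <= 1 ->
    (g (l *: x + (1 - l) *: y)%R <= maxe (g x) (g y))%E.

Definition open_ball0 (a : R) : set V := [set u | enorm u < a].

Definition robustly_quasiconvex (a : R) (f : V -> \bar R) : Prop :=
  forall u, open_ball0 a u -> quasiconvex (fun x => (f x + (dotp u x)%:E)%E).

Definition asymptotic_cone (X : set V) : set V :=
  [set u | exists (t : R^nat) (x : nat -> V),
     t @ \oo --> +oo /\ (forall k, X (x k)) /\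
     (fun k => (t k)^-1 *: x k) @ \oo --> u].

Definition qasymp (f : V -> \bar R) (u : V) : \bar R :=
  ereal_sup [set y : \bar R | exists (x : V) (t : R),
     [/\ dom f x, 0 < t & y = ((f (x + t *: u)%R - f x) * (t^-1)%:E)%E]].

Definition Kq (f : V -> \bar R) : set V := [set d | (qasymp f d <= 0)%E].

Definition fshift (f : V -> \bar R) (u : V) (x : V) : \bar R :=
  (f x - (dotp u x)%:E)%E.

Definition Sol (f : V -> \bar R) (X : set V) (u : V) : set V :=
  [set x | X x /\ forall y, X y -> (fshift f u x <= fshift f u y)%E].

Definition lsc_setmap (F : V -> set V) (ub : V) : Prop :=
  F ub !=set0 /\
  forall W : set V, open W -> F ub `&` W !=set0 ->
    exists2 U, nbhs ub U & forall u, U u -> F u `&` W !=set0.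

Definition unbounded (A : set V) : Prop :=
  forall M : R, exists2 x, A x & M < enorm x.

End Defs.

(* Main.v *)
Require Import Defs.
From HB Require Import structures.
From mathcomp Require Import all_boot all_order all_algebra.
From mathcomp Require Import all_classical all_reals all_analysis.
From mathcomp Require Import lra ring.
Import Order.TTheory GRing.Theory Num.Theory.
Import numFieldNormedType.Exports.
Local Open Scope classical_set_scope.
Local Open Scope ring_scope.

Section Helpers.
Variables (R : realType) (n : nat).
Local Notation V := 'rV[R]_n.

Lemma dotpDr (u x y : V) : dotp u (x + y) = dotp u x + dotp u y.
Proof. by rewrite /dotp -big_split /=; apply: eq_bigr => i _; rewrite mxE mulrDr. Qed.

Lemma dotpZr (u : V) a (x : V) : dotp u (a *: x) = a * dotp u x.
Proof. by rewrite /dotp mulr_sumr; apply: eq_bigr => i _; rewrite mxE mulrCA. Qed.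

Lemma dotpZl a (u x : V) : dotp (a *: u) x = a * dotp u x.
Proof. by rewrite /dotp mulr_sumr; apply: eq_bigr => i _; rewrite mxE mulrA. Qed.

Lemma dotpNl (u x : V) : dotp (- u) x = - dotp u x.
Proof. by rewrite /dotp -sumrN; apply: eq_bigr => i _; rewrite mxE mulNr. Qed.

Lemma dotpNr (u x : V) : dotp u (- x) = - dotp u x.
Proof. by rewrite /dotp -sumrN; apply: eq_bigr => i _; rewrite mxE mulrN. Qed.

Lemma dotpBr (u x y : V) : dotp u (x - y) = dotp u x - dotp u y.
Proof. by rewrite dotpDr dotpNr. Qed.

Lemma dotp0l (x : V) : dotp 0 x = 0.
Proof. by rewrite /dotp big1 // => i _; rewrite mxE mul0r. Qed.

Lemma dotp0r (x : V) : dotp x 0 = 0.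
Proof. by rewrite /dotp big1 // => i _; rewrite mxE mulr0. Qed.

Lemma dotp_ge0 (x : V) : 0 <= dotp x x.
Proof. by rewrite /dotp sumr_ge0 // => i _; rewrite -expr2 sqr_ge0. Qed.

Lemma dotp_gt0 (x : V) : x != 0 -> 0 < dotp x x.
Proof.
move=> x0.
have [i xi] : exists i, x ord0 i != 0.
  apply/not_existsP => H; move/eqP: x0; apply; apply/matrixP => a b.
  rewrite (ord1 a) mxE; apply/eqP; move/negP: (H b); by case: (x ord0 b == 0).
rewrite /dotp (bigD1 i) //= ltr_pwDl //.
  by rewrite lt_def mulf_neq0 //= -expr2 sqr_ge0.
by rewrite sumr_ge0 // => j _; rewrite -expr2 sqr_ge0.
Qed.

Lemma coord_le_norm (x : V) i : `|x ord0 i| <= `|x|.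
Proof.
rewrite [leRHS]/Num.norm /= mx_normrE; apply/bigmax_geP; right => /=.
by exists (ord0, i).
Qed.

Lemma dotp_bound (u x : V) : `|dotp u x| <= n%:R * (`|u| * `|x|).
Proof.
apply: (le_trans (ler_norm_sum _ _ _)).
apply: (@le_trans _ _ (\sum_(i < n) (`|u| * `|x|))).
  apply: ler_sum => i _; rewrite normrM.
  by apply: ler_pM; rewrite ?normr_ge0 ?coord_le_norm.
by rewrite sumr_const card_ord mulr_natl.
Qed.

Lemma enorm_lt (u : V) a : 0 < a -> `|u| * (n.+1)%:R < a -> enorm u < a.
Proof.
move=> a0 ua.
rewrite /enorm -(ger0_norm (ltW a0)) -sqrtr_sqr ltr_sqrt ?exprn_gt0 //.
apply: (le_lt_trans (ler_norm _)).
apply: (le_lt_trans (dotp_bound u u)).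
have h : 0 <= `|u| by [].
apply: (@le_lt_trans _ _ ((`|u| * (n.+1)%:R) ^+ 2)); last first.
  have hx : 0 <= `|u| * (n.+1)%:R by rewrite mulr_ge0.
  by rewrite !expr2; nra.

rewrite exprMn [X in _ <= X * _]expr2 mulrC ler_wpM2l ?mulr_ge0 //.
rewrite -natrX ler_nat; case: n => // k.
by apply: (leq_trans (leqnSn k.+1)); rewrite expnS expn1 leq_pmulr.
Qed.

Lemma dotp_continuous (u : V) : continuous (dotp u).
Proof.
move=> x A /= /nbhs_ballP [e e0 hA].
have h0 : 0 < n%:R * `|u| + 1 by rewrite ltr_wpDl ?mulr_ge0.
apply/nbhs_ballP; exists (e / (n%:R * `|u| + 1)) => [|y]; first by apply: divr_gt0.
rewrite mx_norm_ball /ball_ => xy; apply: hA; rewrite -ball_normE /=.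
rewrite -dotpBr; apply: (le_lt_trans (dotp_bound _ _)).
rewrite mulrA.
apply: (@le_lt_trans _ _ ((n%:R * `|u| + 1) * `|x - y|)).
  by rewrite ler_wpM2r // lerDl.
by rewrite mulrC -ltr_pdivlMr.
Qed.
End Helpers.

Lemma lsc_min {R : realType} {T : topologicalType} (g : T -> \bar R) (K : set T) :
  compact K -> K !=set0 ->
  (forall x a, K x -> (a%:E < g x)%E ->
     exists2 N, nbhs x N & forall y, N y -> (a%:E < g y)%E) ->
  exists2 p, K p & forall y, K y -> (g p <= g y)%E.
Proof.
move=> cK [x0 Kx0] lsc.
have [//|H] := pselect (exists2 p, K p & forall y, K y -> (g p <= g y)%E).
have H' : forall p, K p -> exists2 y, K y & (g y < g p)%E.
  move=> p Kp; apply: contrapT => nH; apply: H; exists p => // y Ky.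
  rewrite leNgt; apply/negP => lt; apply: nH; by exists y.
pose B p := K `&` [set y | (g y < g p)%E].
have FF : Filter (filter_from K B).
  apply: filter_from_filter; first by exists x0.
  move=> i j Ki Kj; have [h|h] := leP (g i) (g j).
    exists i => // w [Kw gw]; split; split => //; exact: (lt_le_trans gw h).
  exists j => // w [Kw gw]; split; split => //; exact: (lt_trans gw h).
have PF : ProperFilter (filter_from K B).
  apply: filter_from_proper => i Ki; have [y Ky gy] := H' i Ki; by exists y.
have FK : filter_from K B K by exists x0 => // y [].
have [p [Kp clp]] := cK _ PF FK.
have [y Ky gyp] := H' p Kp.
have [z [Kz gzy]] : B y !=set0 by have [z Kz gz] := H' y Ky; exists z.
move: gzy gyp; case Egy: (g y) => [a| |] //= gza gap.
  have [N Np hN] := lsc p a Kp gap.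
  have [w [[Kw gw] Nw]] := clp (B y) N (in_filter_from B Ky) Np.
  move: gw; rewrite Egy => gw.
  by have := lt_trans gw (hN w Nw); rewrite ltxx.
  by rewrite ltNge leey in gap.
by rewrite ltNge leNye in gza.
Qed.

Lemma lsc_shift {R : realType} {n : nat} (f : 'rV[R]_n -> \bar R) (u : 'rV[R]_n) :
  lower_semicontinuous f -> lower_semicontinuous (fshift f u).
Proof.
move=> lf x a; rewrite /fshift => hax.
set c := dotp u x.
have [b [e [e0 bf abe]]] : exists b e, [/\ 0 < e, (b%:E < f x)%E & a < b - c - e].
  move: hax; case: (f x) => [r| |] //=.
    rewrite -EFinB lte_fin => h; exists (r - (r - c - a) / 3), ((r - c - a) / 3).
    by rewrite lte_fin /c; split; lra.
  move=> _; exists (a + c + 2), 1; split => //; [exact: ltry | rewrite /c; lra].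
have [N1 N1x hN1] := lf x b bf.
have N2x := @dotp_continuous R n u x _ (nbhsx_ballx (dotp u x) e e0).
exists (N1 `&` (dotp u @^-1` ball (dotp u x) e)); first exact: filterI.
move=> y [/hN1 fy /=]; rewrite -ball_normE /= => hy.
move: fy; case: (f y) => [s| |] //=; last by move=> _; exact: ltry.
rewrite -EFinB !lte_fin => bs.
have : dotp u y < c + e.
  by move: hy; rewrite ltr_distl /c => /andP[h1 h2]; lra.
move=> h; lra.
Qed.

Lemma recession {R : realType} {n : nat} (X : set 'rV[R]_n) x d :
  closed X -> is_convex X -> X x -> asymptotic_cone X d -> X (x + d).
Proof.
move=> cX convX Xx [t [y [tinf [Xy ty]]]].
have t1 : \forall k \near eventually, 1 <= t k by move/cvgryPge : tinf; apply.
have tpos : \forall k \near eventually, 0 < t k.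
  by near=> k; apply: (lt_le_trans ltr01); near: k.
have tV0 : (fun k => (t k)^-1) @ \oo --> 0.
  by apply/(gtr0_cvgV0 tpos).
pose z k := (t k)^-1 *: y k + (1 - (t k)^-1) *: x.
apply: (@closed_cvg _ _ eventually _ z X cX).
  near=> k; have t1k : 1 <= t k by near: k.
  apply: convX => //.
  have tk0 : 0 < t k by apply: lt_le_trans t1k.
  by rewrite invr_ge0 ltW //= invf_le1.
rewrite addrC; apply: cvgD => //.
have hx : (fun k => (1 - (t k)^-1) *: x) @ \oo --> (1 - 0) *: x.
  by apply: cvgZr_tmp; apply: cvgB => //; exact: cvg_cst.
by rewrite subr0 scale1r in hx.
Unshelve. all: by end_near.
Qed.

Section Main.
Variables (R : realType) (n : nat) (f : 'rV[R]_n -> \bar R) (X : set 'rV[R]_n).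
Hypothesis (pf : proper_fun f) (Xd : X `<=` dom f).
Local Notation V := 'rV[R]_n.

Lemma finX x : X x -> f x = (fine (f x))%:E.
Proof.
move=> Xx; rewrite fineK // fin_numE pf.1 /=.
by have := Xd _ Xx; rewrite /dom /= => /lt_eqF ->.
Qed.

Lemma fshift0 x : fshift f 0 x = f x.
Proof. by rewrite /fshift dotp0l sube0. Qed.

Lemma forward_single : lsc_setmap (Sol f X) 0 -> exists x0, Sol f X 0 = [set x0].
Proof.
move=> [[x1 S1] H]; exists x1; apply/seteqP; split => [x2 S2|_ ->] //.
apply: contrapT => ne.
pose d := x1 - x2.
have d0 : d != 0 by rewrite subr_eq0; apply/eqP => e; apply: ne.
pose W := dotp d @^-1` [set r | r < dotp d x1].
have oW : open W.
  apply: open_comp; last exact: open_lt.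
  by move=> z _; apply: dotp_continuous.
have W2 : W x2.
  rewrite /W /= -subr_gt0 -dotpBr; exact: dotp_gt0.
have [U /nbhs_ballP [e /= e0 hU] hSU] := H W oW (ex_intro _ x2 (conj S2 W2)).
pose eps := e / (`|d| + 1).
have eps0 : 0 < eps by rewrite divr_gt0 // ltr_wpDl.
have hb : ball (0 : V) e (eps *: d).
  rewrite mx_norm_ball /ball_ /=.
  rewrite (_ : 0 - eps *: d = - (eps *: d)); last by rewrite sub0r.
  rewrite normrN normrZ gtr0_norm //.
  by rewrite /eps mulrAC ltr_pdivrMr ?ltr_wpDl // ltr_pM2l // ltrDl.
have [z [[Xz hz] Wz]] := hSU (eps *: d) (hU _ hb).
have h1 := hz x1 S1.1.
have h2 := S1.2 z Xz.
move: h1 h2; rewrite !fshift0 /fshift (finX _ Xz) (finX _ S1.1) -!EFinB !lee_fin.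
rewrite !dotpZl => h1 h2.
move: Wz; rewrite /W /= => Wz.
have := mulr_gt0 eps0 (eqbRL (subr_gt0 _ _) Wz).
rewrite mulrBr; lra.
Qed.

Lemma Kq0 : Kq f 0.
Proof.
rewrite /Kq /qasymp /=; apply/ereal_supP => y [x [t [dx t0 ->]]].
have fx : f x \is a fin_num.
  by rewrite fin_numE pf.1 /=; move: dx; rewrite /dom /= => /lt_eqF ->.
by rewrite scaler0 addr0 subee // mul0e.
Qed.

Lemma cone0 x0 : X x0 -> asymptotic_cone X 0.
Proof.
move=> Xx0; exists (fun k => k%:R), (fun _ => x0); split; first exact: cvgr_idn.
split => //.
have t1 : \forall k \near eventually, (1:R) <= k%:R by move/cvgryPge : (@cvgr_idn R); apply.
have tpos : \forall k \near eventually, (0:R) < k%:R.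
  by near=> k; apply: (lt_le_trans ltr01); near: k.
have tV0 : (fun k => (k%:R : R)^-1) @ \oo --> 0.
  by apply/(gtr0_cvgV0 tpos); exact: cvgr_idn.
have := @cvgZr_tmp _ V _ _ eventually_filter _ _ x0 tV0.
by rewrite scale0r.
Unshelve. all: by end_near.
Qed.

Lemma forward_cone x0 : closed X -> is_convex X -> Sol f X 0 = [set x0] ->
  asymptotic_cone X `&` Kq f = [set 0].
Proof.
move=> cX convX S0.
have Sx0 : Sol f X 0 x0 by rewrite S0.
apply/seteqP; split => [d [cd kd]|_ ->]; last by split; [exact: (cone0 _ Sx0.1)|exact: Kq0].
have Xd' := @recession R n X x0 d cX convX Sx0.1 cd.
have h : ((f (x0 + 1 *: d) - f x0) * (1^-1)%:E <= qasymp f d)%E.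
  apply: ereal_sup_ubound; exists x0, 1; split => //; apply: Xd; exact: Sx0.1.
have h2 := le_trans h kd.
move: h2; rewrite scale1r invr1 mule1 (finX _ Xd') (finX _ Sx0.1) -EFinB lee_fin subr_le0 => h3.
have : Sol f X 0 (x0 + d).
  split => // y Xy; rewrite fshift0 (finX _ Xd').
  apply: le_trans (Sx0.2 y Xy); rewrite fshift0 (finX _ Sx0.1) lee_fin //.
rewrite S0 /= => E.
by rewrite -[d](addKr x0) E addNr.
Qed.

Lemma closed_dist_ge (x0 : V) r : closed [set y : V | r <= `|x0 - y|].
Proof.
rewrite -/((Num.norm \o (fun y => x0 - y)) @^-1` [set x | r <= x]).
apply: (preimage_closed _ (@closed_ge _ _)) => y _.
apply: (continuous_comp _ (@norm_continuous _ _ _)).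
exact: (continuousB (@cst_continuous _ _ _ _)).
Qed.

Lemma converse x0 alpha : closed X -> is_convex X -> 0 < alpha ->
  robustly_quasiconvex alpha f -> lower_semicontinuous f ->
  Sol f X 0 = [set x0] -> lsc_setmap (Sol f X) 0.
Proof.
move=> cX convX a0 rq lf S0.
have Sx0 : Sol f X 0 x0 by rewrite S0.
split; first by exists x0.
move=> W oW [x1 [S1 W1]].
have Wx0 : W x0 by move: S1; rewrite S0 /= => <-.
have [e /= e0 hW] : nbhs_ball x0 W by apply/nbhs_ballP; exact: oW.
pose r := e / 2.
have r0 : 0 < r by rewrite divr_gt0.
pose K := X `&` closed_ball_ Num.norm x0 r.
have cK : compact K.
  apply: bounded_closed_compact; last by apply: closedI => //; exact: closed_closed_ball_.
  exists (`|x0| + r); split; first by apply: ger0_real; rewrite addr_ge0 // ltW.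
  move=> M hM y [_ hy]; rewrite /closed_ball_ /= in hy; rewrite /=.
  apply: (le_trans _ (ltW hM)).
  have -> : y = x0 - (x0 - y) by rewrite opprB addrC subrK.
  by apply: (le_trans (ler_normB _ _)); rewrite lerD2l.
have Xx0 : X x0 := Sx0.1.
pose S := K `&` [set y | r <= `|x0 - y|].
have cS : compact S.
  apply: (subclosed_compact _ cK) => [|y []//].
  apply: closedI; last exact: closed_dist_ge.
  by apply: closedI => //; exact: closed_closed_ball_.
have Sgt : forall p, S p -> (f x0 < f p)%E.
  move=> p [[Xp _] hp]; rewrite ltNge; apply/negP => le.
  have : Sol f X 0 p.
    split => // y Xy; rewrite !fshift0; apply: le_trans le _.
    by have := Sx0.2 y Xy; rewrite !fshift0.
  rewrite S0 /= => E; move: hp; rewrite /= E subrr normr0 => hp.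
  by have := lt_le_trans r0 hp; rewrite ltxx.
have [c [c0 hc]] : exists c, 0 < c /\ forall p, S p -> ((fine (f x0) + c)%:E <= f p)%E.
  have [[p0 Sp0]|Se] := pselect (S !=set0); last first.
    by exists 1; split => // p Sp; exfalso; apply: Se; exists p.
  have [p Sp hp] := @lsc_min R _ f S cS (ex_intro _ p0 Sp0) (fun x a _ h => lf x a h).
  have := Sgt p Sp; rewrite (finX _ Xx0); case Efp: (f p) => [q| |] h.
  - exists (q - fine (f x0)); split; first by rewrite subr_gt0 -lte_fin.
    by move=> p' Sp'; rewrite addrC subrK -Efp; exact: hp.
  - by exists 1; split => // p' Sp'; apply: le_trans (hp p' Sp'); rewrite Efp leey.
  - by [].
pose del := Num.min (alpha / (n.+1)%:R) (c / (n%:R * r + 1)).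
have nr0 : 0 < n%:R * r + 1 by rewrite ltr_wpDl // mulr_ge0 // ltW.
have del0 : 0 < del by rewrite lt_min !divr_gt0.
exists (ball (0 : V) del); first exact: nbhsx_ballx.
move=> u hu.
have hu' : `|u| < del.
  move: hu; rewrite mx_norm_ball /ball_ /=.
  by rewrite (_ : 0 - u = - u) ?normrN // sub0r.
move: hu'; rewrite lt_min => /andP[hu1 hu2].
have hu1' : `|u| * (n.+1)%:R < alpha by rewrite -ltr_pdivlMr.
have hu2' : `|u| * (n%:R * r + 1) < c by rewrite -ltr_pdivlMr.
have en : open_ball0 alpha (- u) by rewrite /open_ball0 /=; apply: enorm_lt; rewrite ?normrN.
have qc := rq (- u) en.
have gE : forall x, (f x + (dotp (- u) x)%:E)%E = fshift f u x.
  by move=> x; rewrite /fshift dotpNl EFinN.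
have key : forall p, S p -> (fshift f u x0 < fshift f u p)%E.
  move=> p Sp; have := hc p Sp; rewrite /fshift (finX _ Xx0).
  case: (f p) => [q| |] //= hq; last by rewrite -EFinB ltry.
  rewrite -!EFinB lte_fin; rewrite lee_fin in hq.
  have hb := @dotp_bound R n u (p - x0); rewrite dotpBr in hb.
  have hpx : `|p - x0| <= r by rewrite distrC; case: Sp => [[_ +] _].
  have h4 : n%:R * (`|u| * `|p - x0|) <= n%:R * (`|u| * r).
    by rewrite ler_wpM2l // ler_wpM2l.
  have h5 : n%:R * (`|u| * r) <= `|u| * (n%:R * r + 1).
    have : 0 <= `|u| by [].
    move=> h0; nra.
  have := le_trans (ler_norm _) hb; move=> h6; lra.
have Kx0 : K x0 by split => //; rewrite /closed_ball_ /= subrr normr0 ltW.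
have lsu := lsc_shift f u lf.
have [m Km hm] := @lsc_min R _ (fshift f u) K cK (ex_intro _ x0 Kx0)
  (fun x a _ h => lsu x a h).
exists m; split; last first.
  apply: hW; rewrite mx_norm_ball /ball_ /=.
  case: Km => _ /= hm'; apply: (le_lt_trans hm').
  by rewrite /r ltr_pdivrMr // ltr_pMr // ltr1n.
split; first by case: Km.
move=> y Xy.
have [hy|hy] := leP `|x0 - y| r; first exact: hm.
have ny0 : 0 < `|x0 - y| by apply: lt_trans hy.
pose l := r / `|x0 - y|.
have hl : 0 <= l <= 1.
  apply/andP; split; first by rewrite divr_ge0 // ltW.
  by rewrite /l ler_pdivrMr // mul1r ltW.
pose p := l *: y + (1 - l) *: x0.
have Xp : X p by apply: convX.
have dp : x0 - p = l *: (x0 - y).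
  by apply/rowP => i; rewrite /p !mxE; ring.
have np : `|x0 - p| = r.
  by rewrite dp normrZ ger0_norm ?divr_ge0 ?ltW // divfK // gt_eqF.
have Sp : S p by split; [split => //; rewrite /closed_ball_ /= np|rewrite /= np].
have domg : forall z, X z -> dom (fun x => (f x + (dotp (- u) x)%:E)%E) z.
  by move=> z Xz; rewrite /dom /= (finX _ Xz) -EFinD ltry.
have := qc y x0 l (domg y Xy) (domg x0 Xx0) hl.
rewrite !gE le_max => /orP[h|h].
  exact: le_trans (hm p Sp.1) h.
by have := lt_le_trans (key p Sp) h; rewrite ltxx.
Qed.
End Main.


Theorem mainTheorem12 (R : realType) (n : nat) (f : 'rV[R]_n -> \bar R)
  (X : set 'rV[R]_n) (alpha : R) :
  proper_fun f -> lower_semicontinuous f ->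
  X !=set0 -> closed X -> unbounded (dom f `&` X) ->
  is_convex X -> 0 < alpha -> robustly_quasiconvex alpha f ->
  X `<=` dom f ->
  (lsc_setmap (Sol f X) 0 <->
    ((exists x0, Sol f X 0 = [set x0]) /\
     asymptotic_cone X `&` Kq f = [set 0])).
Proof.
move=> pf lf _ cX _ convX a0 rq Xd; split.
  move=> H; have [x0 S0] := @forward_single R n f X pf Xd H.
  by split; [exists x0 | exact: (@forward_cone R n f X pf Xd x0 cX convX S0)].
move=> [[x0 S0] _].
exact: (@converse R n f X pf Xd x0 alpha cX convX a0 rq lf S0).
Qed.
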